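(* Let $\mathbf{u}$ be a $C^1$ unit vector field on $\mathbb{R}^2$ whose integral curves are straight lines, i.e. $\mathbf{u}(\mathbf{x}+t\mathbf{u}(\mathbf{x}))=\mathbf{u}(\mathbf{x})$ for all $\mathbf{x}$ and $t\ge0$. Let $\mathbf{f}\in C^2_c(S^1;\mathbb{D})$. Then the data $\mathcal{L}_0\mathbf{f}$ and $\mathcal{L}_0^1\mathbf{f}$ are equivalent (each determines the other), and the data $\mathcal{T}_0\mathbf{f}$ and $\mathcal{T}_0^1\mathbf{f}$ are equivalent.
   Context: $\mathbb{D}$ is the open unit disc in $\mathbb{R}^2$; $C_c^2(S^1;\mathbb{D})$ is the space of $C^2$ vector fields on $\mathbb{R}^2$ with compact support in $\mathbb{D}$. For $\mathbf{a}=(a_1,a_2)$, $\mathbf{a}^\perp=(-a_2,a_1)$. Define $\mathcal{L}_0\mathbf{f}(\mathbf{x})=-\int_0^\infty \mathbf{u}(\mathbf{x})\cdot\mathbf{f}(\mathbf{x}+t\mathbf{u}(\mathbf{x}))\,dt$, $\mathcal{T}_0\mathbf{f}(\mathbf{x})=-\int_0^\infty \mathbf{u}^\perp(\mathbf{x})\cdot\mathbf{f}(\mathbf{x}+t\mathbf{u}(\mathbf{x}))\,dt$, and the first moments $\mathcal{L}^1_0\mathbf{f}(\mathbf{x})=-\int_0^\infty t\,\mathbf{u}(\mathbf{x})\cdot\mathbf{f}(\mathbf{x}+t\mathbf{u}(\mathbf{x}))\,dt$, $\mathcal{T}^1_0\mathbf{f}(\mathbf{x})=-\int_0^\infty t\,\mathbf{u}^\perp(\mathbf{x})\cdot\mathbf{f}(\mathbf{x}+t\mathbf{u}(\mathbf{x}))\,dt$.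 *)

(* Defs.v *)
From Stdlib Require Import Reals.
From Coquelicot Require Import Coquelicot.
Open Scope R_scope.

Definition pt := (R * R)%type.
Definition dot (a b : pt) : R := fst a * fst b + snd a * snd b.
Definition perp (a : pt) : pt := (- snd a, fst a).
Definition add_sc (x : pt) (t : R) (v : pt) : pt :=
  (fst x + t * fst v, snd x + t * snd v).

Definition partial1 (g : pt -> R) (p : pt) : R := Derive (fun s => g (s, snd p)) (fst p).
Definition partial2 (g : pt -> R) (p : pt) : R := Derive (fun s => g (fst p, s)) (snd p).

Definition C1_scalar (g : pt -> R) : Prop :=
  (forall p, continuous g p) /\
  (forall p, ex_derive (fun s => g (s, snd p)) (fst p) /\
             ex_derive (fun s => g (fst p, s)) (snd p)) /\
  (forall p, continuous (partial1 g) p /\ continuous (partial2 g) p).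

Definition C2_scalar (g : pt -> R) : Prop :=
  C1_scalar g /\ C1_scalar (partial1 g) /\ C1_scalar (partial2 g).

Definition C1_field (u : pt -> pt) : Prop :=
  C1_scalar (fun p => fst (u p)) /\ C1_scalar (fun p => snd (u p)).

(* C^2_c(S^1; D): C^2 vector fields on R^2 with compact support in the open unit disc,
   i.e. vanishing outside some closed disc of radius r < 1. *)
Definition Cc2_disc (f : pt -> pt) : Prop :=
  C2_scalar (fun p => fst (f p)) /\ C2_scalar (fun p => snd (f p)) /\
  exists r, 0 <= r < 1 /\ forall x, r * r < dot x x -> f x = (0, 0).

Definition int0inf (h : R -> R) : R :=
  RInt_gen h (at_point 0) (Rbar_locally p_infty).

Definition L0 (u f : pt -> pt) (x : pt) : R :=
  - int0inf (fun t => dot (u x) (f (add_sc x t (u x)))).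
Definition T0 (u f : pt -> pt) (x : pt) : R :=
  - int0inf (fun t => dot (perp (u x)) (f (add_sc x t (u x)))).
Definition L01 (u f : pt -> pt) (x : pt) : R :=
  - int0inf (fun t => t * dot (u x) (f (add_sc x t (u x)))).
Definition T01 (u f : pt -> pt) (x : pt) : R :=
  - int0inf (fun t => t * dot (perp (u x)) (f (add_sc x t (u x)))).

(* Main.v *)
Require Import Defs.
From Stdlib Require Import Reals Lra FunctionalExtensionality.
From Coquelicot Require Import Coquelicot.
Open Scope R_scope.


Definition cont (D : R -> R) := forall t, continuous D t.

Lemma exR (D : R -> R) a b : cont D -> ex_RInt D a b.
Proof. intros H; apply (ex_RInt_continuous (V:=R_CompleteNormedModule)); intros; apply H. Qed.

Lemma cont_tmul (D : R -> R) s : cont D -> cont (fun t => (t - s) * D t).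
Proof.
  intros H t. apply (continuous_mult (fun t => t - s) D).
  - apply (continuous_plus (fun t => t) (fun _ => - s)); [apply continuous_id | apply continuous_const].
  - apply H.
Qed.

Lemma cont_tmul0 (D : R -> R) : cont D -> cont (fun t => t * D t).
Proof.
  intros H t. apply (continuous_ext (fun t => (t - 0) * D t)); [intros; simpl; ring| apply cont_tmul, H].
Qed.

Lemma derL (D : R -> R) M s : cont D ->
  is_derive (fun a => RInt D a M) s (- D s).
Proof.
  intros H. apply (is_derive_RInt' D (fun a => RInt D a M) s M).
  - apply filter_forall; intros a. apply (RInt_correct (V:=R_CompleteNormedModule)), exR, H.
  - apply H.
Qed.

Lemma loc_pos s : 0 < s -> locally s (fun a => 0 < a).
Proof.
  intros Hs. exists (mkposreal s Hs). intros a Ha.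
  unfold ball in Ha; simpl in Ha; unfold AbsRing_ball, abs, minus, plus, opp in Ha; simpl in Ha.
  apply Rabs_def2 in Ha. lra.
Qed.

Lemma deriv_zero (P : R -> R) t l : 0 < t -> (forall a, 0 < a -> P a = 0) ->
  is_derive P t l -> l = 0.
Proof.
  intros Ht H H1.
  assert (H2 : is_derive P t 0).
  { apply is_derive_ext_loc with (fun _ => 0).
    - generalize (loc_pos t Ht). apply filter_imp. intros a Ha. symmetry; apply H; lra.
    - apply (is_derive_const (V:=R_NormedModule)). }
  apply is_derive_unique in H1. apply is_derive_unique in H2. congruence.
Qed.

Lemma zeroF (D : R -> R) M : cont D ->
  (forall s, 0 < s -> RInt D s M = 0) -> forall t, 0 < t -> D t = 0.
Proof.
  intros HD H t Ht.
  assert (H1 := deriv_zero _ t _ Ht H (derL D M t HD)). lra.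
Qed.

Lemma core (D : R -> R) M : cont D -> 0 <= M -> (forall t, M <= t -> D t = 0) ->
  ((forall s, 0 <= s -> RInt D s M = 0) <->
   (forall s, 0 <= s -> RInt (fun t => (t - s) * D t) s M = 0)).
Proof.
  intros HD HM Hsupp. split.
  - intros H s Hs.
    assert (Z := zeroF D M HD (fun s Hs => H s (Rlt_le _ _ Hs))).
    rewrite (RInt_ext _ (fun _ => 0)).
    + rewrite RInt_const. unfold scal; simpl; unfold mult; simpl; ring.
    + intros t Ht. rewrite Z. apply Rmult_0_r. destruct Ht as [Ht _].
      unfold Rmin in Ht; destruct (Rle_dec s M); lra.
  - intros H.
    assert (Hs : forall s, 0 < s -> RInt D s M = 0).
    { intros s Hs.
      set (Q := fun a => RInt (fun t => t * D t) a M - a * RInt D a M).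
      assert (EQ : forall a, Q a = RInt (fun t => (t - a) * D t) a M).
      { intros a. unfold Q.
        rewrite (RInt_ext (fun t => (t - a) * D t) (fun t => minus (t * D t) (scal a (D t)))).
        2:{ intros; unfold minus, plus, opp, scal; simpl; unfold mult; simpl; ring. }
        rewrite (RInt_minus (V:=R_CompleteNormedModule)).
        - rewrite (RInt_scal (V:=R_CompleteNormedModule)). reflexivity. apply exR, HD.
        - apply exR. apply cont_tmul0, HD.
        - apply (ex_RInt_scal (V:=R_CompleteNormedModule)), exR, HD. }
      assert (Hd : is_derive (fun a => minus (RInt (fun t => t * D t) a M) (mult a (RInt D a M))) s
                     (minus (- (s * D s)) (plus (mult one (RInt D s M)) (mult s (- D s))))).
      { apply (is_derive_minus (K:=R_AbsRing) (V:=R_NormedModule)).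
        - apply (derL (fun t => t * D t)). apply cont_tmul0, HD.
        - apply (is_derive_mult (K:=R_AbsRing) (fun a => a) (fun a => RInt D a M)). apply (is_derive_id (K:=R_AbsRing)). apply derL, HD. intros; apply Rmult_comm. }
      assert (Z : forall a, 0 < a -> Q a = 0).
      { intros a Ha. rewrite EQ. apply H. lra. }
      assert (Z2 := deriv_zero Q s _ Hs Z Hd).
      revert Z2. unfold minus, plus, opp, mult, one; simpl. intros. lra. }
    intros s Hs0.
    assert (Z := zeroF D M HD Hs).
    rewrite (RInt_ext _ (fun _ => 0)).
    + rewrite RInt_const. unfold scal; simpl; unfold mult; simpl; ring.
    + intros t Ht. apply Z. destruct Ht as [Ht _].
      unfold Rmin in Ht; destruct (Rle_dec s M); lra.
Qed.


Lemma tail_zero (h : R -> R) M : (forall t, M <= t -> h t = 0) ->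
  is_RInt_gen h (at_point M) (Rbar_locally p_infty) 0.
Proof.
  intros Hz. unfold is_RInt_gen, filterlimi, filtermapi. intros P HP.
  apply (Filter_prod _ _ _ (fun a => a = M) (fun b => M < b)).
  - reflexivity.
  - exists M. auto.
  - intros a b Ha Hb. simpl in *. subst a. exists 0. split.
    + apply (is_RInt_ext (fun _ => 0)).
      * intros t Ht. rewrite Hz. reflexivity. unfold Rmin in Ht; destruct (Rle_dec M b); lra.
      * pose proof (is_RInt_const (V:=R_NormedModule) M b 0) as K.
        assert (E : scal (b - M) (0:R_NormedModule) = 0) by (unfold scal; simpl; unfold mult; simpl; ring).
        rewrite E in K. exact K.
    + apply locally_singleton. exact HP.
Qed.

Lemma int0inf_RInt (h : R -> R) M : cont h -> (forall t, M <= t -> h t = 0) ->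
  int0inf h = RInt h 0 M.
Proof.
  intros Hc Hz. unfold int0inf.
  apply (is_RInt_gen_unique (V:=R_CompleteNormedModule)).
  replace (RInt h 0 M) with (plus (RInt h 0 M) 0).
  2:{ unfold plus; simpl; ring. }
  apply (is_RInt_gen_Chasles (V:=R_NormedModule)) with M.
  - apply is_RInt_gen_at_point. apply (RInt_correct (V:=R_CompleteNormedModule)), exR, Hc.
  - apply tail_zero, Hz.
Qed.

Lemma cont_shift (phi : R -> R) s : cont phi -> cont (fun t => phi (s + t)).
Proof.
  intros H t. apply (continuous_comp (fun t => s + t) phi).
  - apply (continuous_plus (fun _ => s) (fun t => t)); [apply continuous_const | apply continuous_id].
  - apply H.
Qed.

Lemma shift (phi : R -> R) M s : cont phi -> (forall t, M <= t -> phi t = 0) -> 0 <= s ->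
  int0inf (fun t => phi (s + t)) = RInt phi s M.
Proof.
  intros Hc Hz Hs.
  rewrite (int0inf_RInt _ M).
  2: apply cont_shift, Hc.
  2: intros; apply Hz; lra.
  rewrite (RInt_ext _ (fun y => scal 1 (phi (1 * y + s)))).
  2:{ intros; unfold scal; simpl; unfold mult; simpl. rewrite Rmult_1_l. f_equal; ring. }
  rewrite (RInt_comp_lin (V:=R_CompleteNormedModule)).
  2: apply exR, Hc.
  replace (1 * 0 + s) with s by ring. replace (1 * M + s) with (s + M) by ring.
  rewrite <- (RInt_Chasles (V:=R_CompleteNormedModule) phi s M (s + M)).
  2,3: apply exR, Hc.
  rewrite (RInt_ext _ (fun _ => 0) M).
  2:{ intros t Ht. apply Hz. unfold Rmin in Ht; destruct (Rle_dec M (s+M)); lra. }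
  rewrite RInt_const. unfold plus, scal; simpl; unfold mult; simpl; ring.
Qed.


Lemma supp_ineq (x a : pt) r t : dot a a = 1 -> 0 <= r < 1 -> dot x x + 2 <= t ->
  r * r < dot (add_sc x t a) (add_sc x t a).
Proof.
  destruct x as [x1 x2], a as [a1 a2]; unfold dot, add_sc; simpl. intros Ha Hr Ht.
  set (c := x1 * x1 + x2 * x2) in *.
  assert (Hc : 0 <= c) by (unfold c; nra).
  assert (H1 : 2 * (x1 * a1 + x2 * a2) >= - (c + 1)) by (unfold c; pose proof (Rle_0_sqr (x1 + a1)); pose proof (Rle_0_sqr (x2 + a2)); unfold Rsqr in *; nra).
  assert (E : (x1 + t * a1) * (x1 + t * a1) + (x2 + t * a2) * (x2 + t * a2)
              = c + 2 * t * (x1 * a1 + x2 * a2) + t * t) by (unfold c; ring_simplify; nra).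
  rewrite E.
  assert (H2 : t * (2 * (x1 * a1 + x2 * a2)) >= t * (- (c + 1))) by (apply Rmult_ge_compat_l; lra).
  nra.
Qed.

Lemma cont_line (x a : pt) t : continuous (fun s : R => add_sc x s a) t.
Proof.
  unfold add_sc.
  apply (continuous_comp_2 (fun s => fst x + s * fst a) (fun s => snd x + s * snd a) (fun p q => (p, q))).
  - apply (continuous_plus (fun _ => fst x) (fun s => s * fst a)); [apply continuous_const|].
    apply (continuous_mult (fun s => s) (fun _ => fst a)); [apply continuous_id|apply continuous_const].
  - apply (continuous_plus (fun _ => snd x) (fun s => s * snd a)); [apply continuous_const|].
    apply (continuous_mult (fun s => s) (fun _ => snd a)); [apply continuous_id|apply continuous_const].
  - apply continuous_ext with (fun p => p). intros [p q]; reflexivity. apply continuous_id.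
Qed.

Lemma cont_F (h : pt -> pt) (x a c : pt) : Cc2_disc h ->
  cont (fun s => dot c (h (add_sc x s a))).
Proof.
  intros [[[Hc1 _] _] [[[Hc2 _] _] _]] t. unfold dot.
  apply (continuous_plus (fun s => fst c * fst (h (add_sc x s a))) (fun s => snd c * snd (h (add_sc x s a)))).
  - apply (continuous_mult (fun _ => fst c) (fun s => fst (h (add_sc x s a)))); [apply continuous_const|].
    apply (continuous_comp (fun s => add_sc x s a) (fun p => fst (h p))). apply cont_line. apply Hc1.
  - apply (continuous_mult (fun _ => snd c) (fun s => snd (h (add_sc x s a)))); [apply continuous_const|].
    apply (continuous_comp (fun s => add_sc x s a) (fun p => snd (h p))). apply cont_line. apply Hc2.
Qed.

Lemma supp_F (h : pt -> pt) (x a c : pt) : Cc2_disc h -> dot a a = 1 ->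
  forall t, dot x x + 2 <= t -> dot c (h (add_sc x t a)) = 0.
Proof.
  intros [_ [_ [r [Hr Hs]]]] Ha t Ht. rewrite Hs. unfold dot; simpl; ring.
  apply (supp_ineq x a r t); auto.
Qed.


Definition Fd (w u h : pt -> pt) (x : pt) (r : R) : R := dot (w (u x)) (h (add_sc x r (u x))).

Lemma cont_Fd w u h x : Cc2_disc h -> cont (Fd w u h x).
Proof. intros Hh. exact (cont_F h x (u x) (w (u x)) Hh). Qed.

Lemma diff_eq (A B : R -> R) s M : cont A -> cont B ->
  (RInt A s M = RInt B s M <-> RInt (fun t => A t - B t) s M = 0).
Proof.
  intros HA HB.
  assert (E : RInt (fun t => A t - B t) s M = RInt A s M - RInt B s M).
  { apply (RInt_minus (V:=R_CompleteNormedModule)); apply exR; assumption. }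
  rewrite E. split; intros; lra.
Qed.

Lemma keys (u : pt -> pt) (Hunit : forall x, dot (u x) (u x) = 1)
  (Hlines : forall x t, 0 <= t -> u (add_sc x t (u x)) = u x)
  (w : pt -> pt) (h : pt -> pt) (Hh : Cc2_disc h) x s y : 0 <= s -> y = add_sc x s (u x) ->
  int0inf (fun t => dot (w (u y)) (h (add_sc y t (u y)))) = RInt (Fd w u h x) s (dot x x + 2) /\
  int0inf (fun t => t * dot (w (u y)) (h (add_sc y t (u y)))) =
    RInt (fun r => (r - s) * Fd w u h x r) s (dot x x + 2).
Proof.
  intros Hs Hy.
  assert (Hu : u y = u x) by (rewrite Hy; apply Hlines; exact Hs).
  rewrite Hu.
  assert (Ha : forall t, add_sc y t (u x) = add_sc x (s + t) (u x)).
  { intros t; rewrite Hy; unfold add_sc; simpl; f_equal; ring. }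
  assert (HF : cont (Fd w u h x)) by exact (cont_Fd w u h x Hh).
  assert (HFz : forall t, dot x x + 2 <= t -> Fd w u h x t = 0)
    by exact (supp_F h x (u x) (w (u x)) Hh (Hunit x)).
  split.
  - transitivity (int0inf (fun t => Fd w u h x (s + t))).
    + apply f_equal. apply functional_extensionality; intros t. rewrite Ha. unfold Fd. exact eq_refl.
    + exact (shift (Fd w u h x) (dot x x + 2) s HF HFz Hs).
  - transitivity (int0inf (fun t => (fun r => (r - s) * Fd w u h x r) (s + t))).
    + apply f_equal. apply functional_extensionality; intros t. rewrite Ha. unfold Fd.
      replace (s + t - s) with t by ring. exact eq_refl.
    + apply (shift (fun r => (r - s) * Fd w u h x r) (dot x x + 2) s). exact (cont_tmul _ s HF).
      intros t Ht. rewrite HFz. ring. exact Ht. exact Hs.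
Qed.

Lemma add_sc0 x v : add_sc x 0 v = x.
Proof. destruct x; unfold add_sc; simpl; f_equal; ring. Qed.

Lemma gen (u : pt -> pt) (Hunit : forall x, dot (u x) (u x) = 1)
  (Hlines : forall x t, 0 <= t -> u (add_sc x t (u x)) = u x)
  (w : pt -> pt) (f g : pt -> pt) (Hf : Cc2_disc f) (Hg : Cc2_disc g) :
  (forall x, - int0inf (fun t => dot (w (u x)) (f (add_sc x t (u x)))) =
             - int0inf (fun t => dot (w (u x)) (g (add_sc x t (u x))))) <->
  (forall x, - int0inf (fun t => t * dot (w (u x)) (f (add_sc x t (u x)))) =
             - int0inf (fun t => t * dot (w (u x)) (g (add_sc x t (u x))))).
Proof.
  assert (MAIN : forall x,
    (forall s, 0 <= s -> forall y, y = add_sc x s (u x) ->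
       - int0inf (fun t => dot (w (u y)) (f (add_sc y t (u y)))) =
       - int0inf (fun t => dot (w (u y)) (g (add_sc y t (u y))))) <->
    (forall s, 0 <= s -> forall y, y = add_sc x s (u x) ->
       - int0inf (fun t => t * dot (w (u y)) (f (add_sc y t (u y)))) =
       - int0inf (fun t => t * dot (w (u y)) (g (add_sc y t (u y)))))).
  { intros x.
    assert (HFf : cont (Fd w u f x)) by exact (cont_Fd w u f x Hf).
    assert (HFg : cont (Fd w u g x)) by exact (cont_Fd w u g x Hg).
    assert (HM : 0 <= dot x x + 2) by (unfold dot; pose proof (Rle_0_sqr (fst x)); pose proof (Rle_0_sqr (snd x)); unfold Rsqr in *; lra).
    assert (Hz : forall t, dot x x + 2 <= t -> Fd w u f x t - Fd w u g x t = 0).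
    { intros t Ht. unfold Fd. rewrite (supp_F f x (u x) (w (u x)) Hf (Hunit x) t Ht).
      rewrite (supp_F g x (u x) (w (u x)) Hg (Hunit x) t Ht). ring. }
    assert (HD : cont (fun t => Fd w u f x t - Fd w u g x t)).
    { intros t. apply (continuous_plus (Fd w u f x) (fun t => opp (Fd w u g x t))).
      apply HFf. apply (continuous_opp (Fd w u g x)), HFg. }
    pose proof (core (fun t => Fd w u f x t - Fd w u g x t) (dot x x + 2) HD HM Hz) as C.
    assert (E0 : forall s, 0 <= s -> forall y, y = add_sc x s (u x) ->
       (- int0inf (fun t => dot (w (u y)) (f (add_sc y t (u y)))) =
       - int0inf (fun t => dot (w (u y)) (g (add_sc y t (u y))))) <->
       RInt (fun t => Fd w u f x t - Fd w u g x t) s (dot x x + 2) = 0).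
    { intros s Hs y Hy.
      destruct (keys u Hunit Hlines w f Hf x s y Hs Hy) as [K1 _].
      destruct (keys u Hunit Hlines w g Hg x s y Hs Hy) as [K2 _].
      rewrite K1, K2. rewrite <- (diff_eq _ _ s (dot x x + 2) HFf HFg). split; intros; lra. }
    assert (E1 : forall s, 0 <= s -> forall y, y = add_sc x s (u x) ->
       (- int0inf (fun t => t * dot (w (u y)) (f (add_sc y t (u y)))) =
       - int0inf (fun t => t * dot (w (u y)) (g (add_sc y t (u y))))) <->
       RInt (fun t => (t - s) * (Fd w u f x t - Fd w u g x t)) s (dot x x + 2) = 0).
    { intros s Hs y Hy.
      destruct (keys u Hunit Hlines w f Hf x s y Hs Hy) as [_ K1].
      destruct (keys u Hunit Hlines w g Hg x s y Hs Hy) as [_ K2].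
      rewrite K1, K2.
      rewrite (RInt_ext (fun t => (t - s) * (Fd w u f x t - Fd w u g x t))
                        (fun t => (t - s) * Fd w u f x t - (t - s) * Fd w u g x t)).
      2:{ intros t _. change ((t - s) * (Fd w u f x t - Fd w u g x t) = (t - s) * Fd w u f x t - (t - s) * Fd w u g x t); ring. }
      rewrite <- (diff_eq (fun t => (t - s) * Fd w u f x t) (fun t => (t - s) * Fd w u g x t) s (dot x x + 2)
                    (cont_tmul _ s HFf) (cont_tmul _ s HFg)).
      split; intros; lra. }
    split.
    - intros H s Hs y Hy. apply (proj2 (E1 s Hs y Hy)). apply (proj1 C); [|exact Hs].
      intros s' Hs'. apply (proj1 (E0 s' Hs' _ eq_refl)). apply (H s' Hs' _ eq_refl).
    - intros H s Hs y Hy. apply (proj2 (E0 s Hs y Hy)). apply (proj2 C); [|exact Hs].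
      intros s' Hs'. apply (proj1 (E1 s' Hs' _ eq_refl)). apply (H s' Hs' _ eq_refl). }
  split.
  - intros H x. exact (proj1 (MAIN x) (fun s _ y _ => H y) 0 (Rle_refl 0) x (eq_sym (add_sc0 x (u x)))).
  - intros H x. exact (proj2 (MAIN x) (fun s _ y _ => H y) 0 (Rle_refl 0) x (eq_sym (add_sc0 x (u x)))).
Qed.

Theorem lemma4p1 (u : pt -> pt)
  (Hu : C1_field u)
  (Hunit : forall x, dot (u x) (u x) = 1)
  (Hlines : forall x t, 0 <= t -> u (add_sc x t (u x)) = u x)
  (f g : pt -> pt) (Hf : Cc2_disc f) (Hg : Cc2_disc g) :
  ((forall x, L0 u f x = L0 u g x) <-> (forall x, L01 u f x = L01 u g x)) /\
  ((forall x, T0 u f x = T0 u g x) <-> (forall x, T01 u f x = T01 u g x)).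
Proof.
  split.
  - exact (gen u Hunit Hlines (fun v => v) f g Hf Hg).
  - exact (gen u Hunit Hlines perp f g Hf Hg).
Qed.
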